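(* Fix $n$, $m$, a scoring vector $s$ and a distribution $\Psi$ over preference profiles, and suppose there is a function $u$ such that for every vector $k=(k_1,\ldots,k_n)$ of non-negative integers with $\sum_i k_i=m$ and every $i\in[n]$, $EU^k_\Psi(a_i)=u\big(k_i,\sum_{j<i}k_j\big)$. Then among the vectors $k$ maximizing the egalitarian social welfare $SW^e_\Psi(k)=\min_{a}EU^k_\Psi(a)$ there is one that is non-decreasing, i.e. $k_1\le k_2\le\cdots\le k_n$.
   Context: There are $n$ agents $a_1,\ldots,a_n$ and $m$ items. A preference profile assigns to each agent a strict ranking of the items. A scoring vector is $s=(s_1,\ldots,s_m)$ of non-negative rationals with $s_1\ge\cdots\ge s_m$; an agent's value for her $j$-th preferred item is $s_j$, and utilities are additive. Given $k=(k_1,\ldots,k_n)$ with non-negative integer entries summing to $m$, agent $a_1$ first picks $k_1$ items, then $a_2$ picks $k_2$ of the remaining items, etc., each agent greedily picking her most preferred remaining items. $U^k_P(a)$ is the total score of the items agent $a$ receives under profile $P$, and $EU^k_\Psi(a)=\mathbb{E}_{P\sim\Psi}[U^k_P(a)]$. *)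

(* Defs.v *)
From HB Require Import structures.
From mathcomp Require Import all_boot all_order all_algebra all_fingroup.
Set Implicit Arguments. Unset Strict Implicit. Unset Printing Implicit Defensive.
Import Order.TTheory GRing.Theory Num.Theory.
Local Open Scope ring_scope.

(* Agents are 'I_n (agent a_{i+1} is i), items are 'I_m.
   A ranking is a permutation sigma : {perm 'I_m}, where sigma j is the
   agent's (j+1)-th preferred item; so an item x has rank (sigma^-1 x). *)
Definition profile (n m : nat) := {ffun 'I_n -> {perm 'I_m}}.

Definition scoring_vector (m : nat) (s : 'I_m -> rat) : Prop :=
  (forall j, 0 <= s j) /\ (forall j j' : 'I_m, (j <= j')%N -> s j' <= s j).

Definition distribution (n m : nat) (Psi : profile n m -> rat) : Prop :=
  (forall P, 0 <= Psi P) /\ \sum_(P : profile n m) Psi P = 1.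

Definition picks (m : nat) (sigma : {perm 'I_m}) (R : {set 'I_m}) (c : nat)
  : {set 'I_m} :=
  [set x in take c [seq sigma j | j <- enum 'I_m & sigma j \in R]].

Fixpoint alloc_aux (n m : nat) (P : profile n m) (k : 'I_n -> nat)
    (l : seq 'I_n) (R : {set 'I_m}) : seq {set 'I_m} :=
  match l with
  | [::] => [::]
  | i :: l' => let B := picks (P i) R (k i) in B :: alloc_aux P k l' (R :\: B)
  end.

Definition bundle (n m : nat) (P : profile n m) (k : 'I_n -> nat) (i : 'I_n)
  : {set 'I_m} :=
  nth set0 (alloc_aux P k (enum 'I_n) setT) i.

Definition U (n m : nat) (s : 'I_m -> rat) (P : profile n m) (k : 'I_n -> nat)
    (i : 'I_n) : rat :=
  \sum_(x in bundle P k i) s ((P i)^-1 x)%g.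

Definition EU (n m : nat) (s : 'I_m -> rat) (Psi : profile n m -> rat)
    (k : 'I_n -> nat) (i : 'I_n) : rat :=
  \sum_(P : profile n m) Psi P * U s P k i.

(* egalitarian social welfare: min over agents of EU (0 if there are no agents) *)
Definition SWe (n m : nat) (s : 'I_m -> rat) (Psi : profile n m -> rat)
    (k : 'I_n -> nat) : rat :=
  match [seq EU s Psi k i | i <- enum 'I_n] with
  | [::] => 0
  | x :: xs => foldr Num.min x xs
  end.

Definition valid_k {n : nat} (m : nat) (k : 'I_n -> nat) : Prop :=
  (\sum_(i < n) k i)%N = m.

Definition nondecreasing_k (n : nat) (k : 'I_n -> nat) : Prop :=
  forall i j : 'I_n, (i <= j)%N -> (k i <= k j)%N.

(* Main.v *)
Require Import Defs.
From HB Require Import structures.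
From mathcomp Require Import all_boot all_order all_algebra all_fingroup.
From Stdlib Require Import FunctionalExtensionality.
From mathcomp Require Import zify.
Set Implicit Arguments. Unset Strict Implicit. Unset Printing Implicit Defensive.
Import Order.TTheory GRing.Theory Num.Theory.
Local Open Scope ring_scope.

Lemma take_succ_le (T : eqType) (f : T -> rat) (b : rat) (X : seq T) (c : nat) :
  0 <= b -> (forall x, x \in X -> f x <= b) ->
  \sum_(x <- take c.+1 X) f x <= \sum_(x <- take c X) f x + b.
Proof.
move=> b0; elim: X c => [|x X IH] c HX /=.
  by rewrite unlock /= add0r.
case: c => [|c] /=.
  by rewrite take0 big_nil big_cons big_nil add0r addr0 HX // mem_head.
rewrite !big_cons -addrA lerD2l IH // => y Hy; apply: HX; by rewrite inE Hy orbT.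
Qed.

Lemma take_filter_le (T : eqType) (f : T -> rat) (p : pred T) (L : seq T) (c : nat) :
  (forall x, 0 <= f x) -> pairwise (fun a b => f b <= f a) L ->
  \sum_(x <- take c (filter p L)) f x <= \sum_(x <- take c L) f x.
Proof.
move=> f0; elim: L c => [|a L IH] c /=; first by [].
move=> /andP[/allP Ha HL].
case: c => [|c]; first by rewrite !take0 !big_nil.
case: (p a) => /=.
  by rewrite !big_cons lerD2l IH.
rewrite big_cons.
apply: le_trans; first apply: (@take_succ_le _ f (f a) [seq x <- L | p x] c (f0 a)).
  by move=> x; rewrite mem_filter => /andP[_ /Ha].
by rewrite addrC lerD2l IH.
Qed.

Lemma take_mono (T : eqType) (f : T -> rat) (L : seq T) (c c' : nat) :
  (forall x, 0 <= f x) -> (c <= c')%N ->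
  \sum_(x <- take c L) f x <= \sum_(x <- take c' L) f x.
Proof.
move=> f0 /subnKC <-; rewrite takeD big_cat /= lerDl.
by apply: sumr_ge0 => x _.
Qed.

Definition rankL (m : nat) (sg : {perm 'I_m}) (R : {set 'I_m}) : seq 'I_m :=
  [seq j <- enum 'I_m | sg j \in R].

Definition Vs (m : nat) (s : 'I_m -> rat) (sg : {perm 'I_m}) (R : {set 'I_m}) (c : nat) : rat :=
  \sum_(j <- take c (rankL sg R)) s j.

Lemma picks_val (m : nat) (s : 'I_m -> rat) (sg : {perm 'I_m}) (R : {set 'I_m}) (c : nat) :
  \sum_(x in picks sg R c) s ((sg^-1)%g x) = Vs s sg R c.
Proof.
rewrite /picks /Vs.
have -> : [seq sg j | j <- enum 'I_m & sg j \in R] = map sg (rankL sg R) by [].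
rewrite -map_take.
have U : uniq (map sg (take c (rankL sg R))).
  by rewrite (map_inj_uniq (@perm_inj _ sg)) take_uniq // filter_uniq // enum_uniq.
transitivity (\sum_(x <- map sg (take c (rankL sg R))) s ((sg^-1)%g x)).
  by rewrite big_uniq //; apply: eq_bigl => x; rewrite inE.
by rewrite big_map; apply: eq_bigr => j _; rewrite permK.
Qed.

Fixpoint remA (n m : nat) (P : profile n m) (k : 'I_n -> nat) (l : seq 'I_n)
    (R : {set 'I_m}) (t : nat) : {set 'I_m} :=
  match l, t with
  | i :: l', t'.+1 => remA P k l' (R :\: picks (P i) R (k i)) t'
  | _, _ => R
  end.

Lemma nth_alloc (n m : nat) (P : profile n m) (k : 'I_n -> nat) (l : seq 'I_n)
   (R : {set 'I_m}) (t : nat) (i0 : 'I_n) : (t < size l)%N ->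
  nth set0 (alloc_aux P k l R) t = picks (P (nth i0 l t)) (remA P k l R t) (k (nth i0 l t)).
Proof.
elim: l R t => [|a l IH] R [|t] //= Ht.
by rewrite IH.
Qed.

Lemma remA_step (n m : nat) (P : profile n m) (k : 'I_n -> nat) (l : seq 'I_n)
   (R : {set 'I_m}) (t : nat) (i0 : 'I_n) : (t < size l)%N ->
  remA P k l R t.+1 = remA P k l R t :\: picks (P (nth i0 l t)) (remA P k l R t) (k (nth i0 l t)).
Proof.
elim: l R t => [|a l IH] R t //= Ht.
case: t Ht => [|t] Ht /=; first by case: l {IH Ht}.
by rewrite IH.
Qed.

Lemma remA_agree (n m : nat) (P : profile n m) (k1 k2 : 'I_n -> nat) (l : seq 'I_n)
   (R : {set 'I_m}) (t : nat) :
  (forall x, x \in take t l -> k1 x = k2 x) -> remA P k1 l R t = remA P k2 l R t.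
Proof.
elim: l R t => [|a l IH] R [|t] //= H.
rewrite H ?mem_head //; apply: IH => x Hx; apply: H; by rewrite inE Hx orbT.
Qed.

Lemma take_enum_lt (n : nat) (x : 'I_n) (t : nat) : x \in take t (enum 'I_n) -> (x < t)%N.
Proof. by rewrite in_take ?mem_enum // index_enum_ord. Qed.

Lemma nth_enum_self (n : nat) (i : 'I_n) : nth i (enum 'I_n) i = i.
Proof. by apply: val_inj; rewrite /= nth_enum_ord. Qed.

Lemma U_eq (n m : nat) (s : 'I_m -> rat) (P : profile n m) (k : 'I_n -> nat) (i : 'I_n) :
  U s P k i = Vs s (P i) (remA P k (enum 'I_n) setT i) (k i).
Proof.
rewrite /U /bundle (@nth_alloc n m P k _ _ i i) ?size_enum_ord // nth_enum_self.
exact: picks_val.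
Qed.

Lemma remA_enum_step (n m : nat) (P : profile n m) (k : 'I_n -> nat) (i i1 : 'I_n) :
  val i1 = i.+1 ->
  remA P k (enum 'I_n) setT i1 = remA P k (enum 'I_n) setT i :\:
     picks (P i) (remA P k (enum 'I_n) setT i) (k i).
Proof.
move=> Hi; rewrite Hi (@remA_step n m P k _ _ i i) ?size_enum_ord ?nth_enum_self // -Hi; exact: ltn_ord.
Qed.

Lemma remA_enum_agree (n m : nat) (P : profile n m) (k1 k2 : 'I_n -> nat) (t : nat) :
  (forall x : 'I_n, (x < t)%N -> k1 x = k2 x) ->
  remA P k1 (enum 'I_n) setT t = remA P k2 (enum 'I_n) setT t.
Proof. by move=> H; apply: remA_agree => x /take_enum_lt; apply: H. Qed.

Lemma picks_mono (m : nat) (sg : {perm 'I_m}) (R : {set 'I_m}) (c c' : nat) :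
  (c <= c')%N -> picks sg R c \subset picks sg R c'.
Proof.
move=> Hc; apply/subsetP => x; rewrite !inE -(take_takel _ Hc); exact: mem_take.
Qed.

Lemma enum_pairwise (m : nat) (s : 'I_m -> rat) : scoring_vector s ->
  pairwise (fun a b => s b <= s a) (enum 'I_m).
Proof.
move=> [_ Hs].
have H : pairwise (relpre val ltn) (enum 'I_m).
  by rewrite -pairwise_map val_enum_ord -sorted_pairwise ?iota_ltn_sorted //; exact: ltn_trans.
apply: sub_pairwise H => a b /= Hab; apply: Hs; exact: ltnW.
Qed.

Lemma Vs_sub (m : nat) (s : 'I_m -> rat) (sg : {perm 'I_m}) (R R' : {set 'I_m}) (c : nat) :
  scoring_vector s -> R' \subset R -> Vs s sg R' c <= Vs s sg R c.
Proof.
move=> Hs HR; rewrite /Vs.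
have -> : rankL sg R' = [seq j <- rankL sg R | sg j \in R'].
  rewrite /rankL -filter_predI; apply: eq_filter => j /=.
  by case: (boolP (sg j \in R')) => //= /(subsetP HR) ->.
apply: take_filter_le; first by case: Hs.
by apply: pairwise_filter; exact: enum_pairwise.
Qed.

Lemma Vs_first (m : nat) (s : 'I_m -> rat) (sg sg' : {perm 'I_m}) (R : {set 'I_m}) (c : nat) :
  scoring_vector s -> Vs s sg' R c <= Vs s sg setT c.
Proof.
move=> Hs; rewrite /Vs.
have -> : rankL sg setT = enum 'I_m.
  by rewrite /rankL (eq_filter (a2 := predT)) ?filter_predT // => j; rewrite inE.
apply: take_filter_le; first by case: Hs.
exact: enum_pairwise.
Qed.

Lemma Vs_mono (m : nat) (s : 'I_m -> rat) (sg : {perm 'I_m}) (R : {set 'I_m}) (c c' : nat) :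
  scoring_vector s -> (c <= c')%N -> Vs s sg R c <= Vs s sg R c'.
Proof. by move=> [Hs _] Hc; apply: take_mono. Qed.

Lemma foldmin_prop (x : rat) (xs : seq rat) :
  (forall y, y \in x :: xs -> foldr Num.min x xs <= y) /\ foldr Num.min x xs \in x :: xs.
Proof.
elim: xs => [|z xs [IH1 IH2]] /=.
  by split; [move=> y; rewrite inE => /eqP -> | rewrite mem_head].
split.
  move=> y; rewrite !inE => /or3P[/eqP->|/eqP->|Hy].
  - by rewrite ge_min IH1 ?mem_head ?orbT.
  - by rewrite ge_min lexx.
  - by rewrite ge_min IH1 ?orbT // inE Hy orbT.
rewrite /Num.min; case: ifP => _; first by rewrite !inE eqxx orbT.
move: IH2; rewrite !inE => /orP[->|->]; by rewrite ?orbT.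
Qed.

Lemma SWe_lb (n m : nat) (s : 'I_m -> rat) (Psi : profile n m -> rat) (k : 'I_n -> nat) (i : 'I_n) :
  SWe s Psi k <= EU s Psi k i.
Proof.
rewrite /SWe.
have : EU s Psi k i \in [seq EU s Psi k i0 | i0 <- enum 'I_n] by apply: map_f; rewrite mem_enum.
case: [seq _ | _ <- _] => [//|x xs] H.
by case: (foldmin_prop x xs) => H1 _; apply: H1.
Qed.

Lemma SWe_in (N m : nat) (s : 'I_m -> rat) (Psi : profile N.+1 m -> rat) (k : 'I_N.+1 -> nat) :
  exists i, SWe s Psi k = EU s Psi k i.
Proof.
rewrite /SWe.
have : size [seq EU s Psi k i0 | i0 <- enum 'I_N.+1] = N.+1 by rewrite size_map size_enum_ord.
have : forall y, y \in [seq EU s Psi k i0 | i0 <- enum 'I_N.+1] -> exists i, y = EU s Psi k i.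
  by move=> y /mapP[i _ ->]; exists i.
case: [seq _ | _ <- _] => [//|x xs] H _.
by case: (foldmin_prop x xs) => _ /H.
Qed.

Lemma SWe_le (N m : nat) (s : 'I_m -> rat) (Psi : profile N.+1 m -> rat) (k k' : 'I_N.+1 -> nat) :
  (forall i, SWe s Psi k <= EU s Psi k' i) -> SWe s Psi k <= SWe s Psi k'.
Proof. by move=> H; case: (SWe_in s Psi k') => i ->. Qed.

Lemma EU_le (n m : nat) (s : 'I_m -> rat) (Psi : profile n m -> rat) (k k' : 'I_n -> nat) (i i' : 'I_n) :
  distribution Psi -> (forall P, U s P k i <= U s P k' i') -> EU s Psi k i <= EU s Psi k' i'.
Proof.
move=> [HP _] H; apply: ler_sum => P _; apply: ler_wpM2l => //.
Qed.

Lemma sum2 (n : nat) (f g : 'I_n -> nat) (a b : 'I_n) : a != b ->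
  (forall j, j != a -> j != b -> f j = g j) ->
  (\sum_j f j + (g a + g b) = \sum_j g j + (f a + f b))%N.
Proof.
move=> ab H.
have E : forall h : 'I_n -> nat,
    (\sum_j h j = h a + (h b + \sum_(j | (j != a) && (j != b)) h j))%N.
  move=> h; rewrite (bigD1 a) //; congr (_ + _)%N.
  by rewrite (bigD1 b) //= eq_sym.
rewrite (E f) (E g).
have -> : (\sum_(j | (j != a) && (j != b)) f j = \sum_(j | (j != a) && (j != b)) g j)%N.
  by apply: eq_bigr => j /andP[ja jb]; apply: H.
lia.
Qed.

Lemma prefix_ord (N : nat) (F : 'I_N.+1 -> nat) (j : nat) : (j <= N.+1)%N ->
  (\sum_(l < N.+1 | (l < j)%N) F l = \sum_(0 <= l < j) F (inord l))%N.
Proof.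
elim: j => [|j IH] Hj.
  by rewrite big_geq // big_pred0 // => l.
rewrite big_nat_recr //= -IH ?(ltnW Hj) //.
rewrite (bigD1 (inord j)) /=; last by rewrite inordK.
rewrite addnC; congr (_ + _)%N; apply: eq_bigl => l.
rewrite ltnS leq_eqVlt; apply/andP/idP.
  by case=> /orP[/eqP E|//]; rewrite -(inj_eq val_inj) /= inordK // E eqxx.
move=> lj; split; first by rewrite lj orbT.
by rewrite -(inj_eq val_inj) /= inordK //; apply/eqP => E; rewrite E ltnn in lj.
Qed.

Lemma remA0 (n m : nat) (P : profile n m) (k : 'I_n -> nat) (l : seq 'I_n) (R : {set 'I_m}) :
  remA P k l R 0 = R.
Proof. by case: l. Qed.

Definition pot (n : nat) (k : 'I_n -> nat) : nat := (\sum_(j < n) j * k j)%N.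

Lemma letr (x y z : rat) : x <= y -> y <= z -> x <= z.
Proof. exact: le_trans. Qed.

Lemma swap_lemma (N m : nat) (s : 'I_m -> rat) (Psi : profile N.+1 m -> rat)
    (u : nat -> nat -> rat) :
  scoring_vector s -> distribution Psi ->
  (forall k : 'I_N.+1 -> nat, valid_k m k ->
     forall i : 'I_N.+1, EU s Psi k i = u (k i) (\sum_(j < N.+1 | (j < i)%N) k j)%N) ->
  forall (k : 'I_N.+1 -> nat) (i i1 : 'I_N.+1), valid_k m k -> val i1 = i.+1 ->
  (k i1 < k i)%N ->
  let k' := fun j => k (tperm i i1 j) in
  [/\ valid_k m k', (pot k < pot k')%N & SWe s Psi k <= SWe s Psi k'].
Proof.
move=> Hs HPsi Hu k i i1 Hk Hi1 Hlt k'.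
have ii1 : i != i1 by rewrite -(inj_eq val_inj) Hi1 neq_ltn ltnSn.
have Hk' : valid_k m k'.
  by rewrite /valid_k -Hk [RHS](reindex_inj (@perm_inj _ (tperm i i1))).
have k'i : k' i = k i1 by rewrite /k' tpermL.
have k'i1 : k' i1 = k i by rewrite /k' tpermR.
have k'o : forall j, j != i -> j != i1 -> k' j = k j.
  by move=> j ji ji1; rewrite /k' tpermD // eq_sym.
split => //.
  have E : (\sum_(j < N.+1) j * k' j + (i * k i + i1 * k i1) = \sum_(j < N.+1) j * k j + (i * k' i + i1 * k' i1))%N.
    by apply: (@sum2 _ (fun j : 'I_N.+1 => j * k' j)%N (fun j : 'I_N.+1 => j * k j)%N) => // j ji ji1; rewrite k'o.
  rewrite /pot; rewrite k'i k'i1 Hi1 in E; nia.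
have Ragree : forall P : profile N.+1 m, remA P k' (enum 'I_N.+1) setT i = remA P k (enum 'I_N.+1) setT i.
  move=> P; apply: (@remA_enum_agree _ _ P k' k i) => x xi; apply: k'o.
    by rewrite -(inj_eq val_inj) /= neq_ltn xi.
  by rewrite -(inj_eq val_inj) /= Hi1 neq_ltn ltnS ltnW.
have Hi1ge : SWe s Psi k <= EU s Psi k' i1.
  apply: (letr (SWe_lb s Psi k i1)); apply: EU_le => // P.
  rewrite !U_eq (remA_enum_step _ _ Hi1) (remA_enum_step P k' Hi1) Ragree k'i k'i1.
  apply: letr; last exact: (Vs_mono _ _ Hs (ltnW Hlt)).
  by apply: Vs_sub => //; apply: setDS; apply: picks_mono; exact: ltnW.
apply: SWe_le => j.
case: (eqVneq j i1) => [->//|ji1].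
case: (eqVneq j i) => [->|ji]; last first.
  have jn1 : (j : nat) != i by rewrite (inj_eq val_inj).
  have jn2 : (j : nat) != i.+1 by rewrite -Hi1 (inj_eq val_inj).
  have -> : EU s Psi k' j = EU s Psi k j.
    rewrite !Hu // k'o //; congr (u _ _).
    rewrite [RHS](reindex_inj (@perm_inj _ (tperm i i1))); apply: eq_bigl => l /=.
    case: tpermP => [->|->|//].
      by rewrite Hi1; apply/idP/idP => H; lia.
    by rewrite Hi1; apply/idP/idP => H; lia.
  exact: SWe_lb.
apply: (letr (SWe_lb s Psi k i1)).
case Ei: (val i) => [|i0].
  apply: EU_le => // P; rewrite !U_eq Ei remA0 k'i; exact: Vs_first.
have i0lt : (i0 < N.+1)%N by have := ltn_ord i; rewrite Ei => H; exact: ltnW.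
pose ip : 'I_N.+1 := inord i0.
have Hip : val ip = i0 by rewrite /= inordK.
have ipi : ip != i by rewrite -(inj_eq val_inj) Hip Ei neq_ltn ltnSn.
have ipi1 : ip != i1 by rewrite -(inj_eq val_inj) Hip Hi1 Ei neq_ltn ltnS ltnW.
pose k'' := fun j => if j == ip then (k ip + k i)%N else if j == i1 then 0%N else k' j.
have k''i : k'' i = k i1 by rewrite /k'' eq_sym (negbTE ipi) (negbTE ii1) k'i.
have k''ip : k'' ip = (k ip + k i)%N by rewrite /k'' eqxx.
have k''o : forall j, j != ip -> j != i1 -> k'' j = k' j.
  by move=> j2 j3 j4; rewrite /k'' (negbTE j3) (negbTE j4).
have k'ip : k' ip = k ip by rewrite k'o.
have Hk'' : valid_k m k''.
  have E : (\sum_(j < N.+1) k'' j + (k' ip + k' i1) = \sum_(j < N.+1) k' j + (k'' ip + k'' i1))%N.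
    by apply: sum2 => // j2 j3 j4; rewrite k''o.
  have k''i1 : k'' i1 = 0%N by rewrite /k'' eq_sym (negbTE ipi1) eqxx.
  move: Hk'; rewrite /valid_k k''ip k''i1 k'ip k'i1 in E *; lia.
have -> : EU s Psi k i1 = EU s Psi k'' i.
  rewrite !Hu // k''i; congr (u _ _).
  rewrite !prefix_ord ?(ltnW (ltn_ord _)) // Hi1 Ei !big_nat_recr //=.
  have -> : inord i0 = ip by [].
  have -> : inord i0.+1 = i by apply: val_inj; rewrite /= inordK -Ei ?ltn_ord.
  rewrite k''ip addnA; congr (_ + _ + _)%N.
  apply: eq_big_nat => l /andP[_ li0].
  have Hl : (l < N.+1)%N by apply: (ltn_trans li0).
  have vl : val (inord l : 'I_N.+1) = l by rewrite /= inordK.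
  have l1 : (inord l : 'I_N.+1) != ip by rewrite -(inj_eq val_inj) vl Hip neq_ltn li0.
  have l2 : (inord l : 'I_N.+1) != i by rewrite -(inj_eq val_inj) vl Ei neq_ltn ltnS ltnW.
  have l3 : (inord l : 'I_N.+1) != i1.
    by rewrite -(inj_eq val_inj) vl Hi1 Ei neq_ltn ltnS ltnW // ltnW.
  by rewrite k''o // k'o.
apply: EU_le => // P; rewrite !U_eq k''i k'i.
have Hst : val i = (val ip).+1 by rewrite Hip.
rewrite (remA_enum_step P k'' Hst) (remA_enum_step P k' Hst).
have -> : remA P k'' (enum 'I_N.+1) setT ip = remA P k' (enum 'I_N.+1) setT ip.
  apply: remA_enum_agree => x xip; apply: k''o.
    by rewrite -(inj_eq val_inj) neq_ltn xip.
  by rewrite -(inj_eq val_inj) Hi1 neq_ltn (ltn_trans xip) // Hip Ei ltnS ltnW.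
apply: Vs_sub => //; apply: setDS; apply: picks_mono.
by rewrite k''ip k'ip leq_addr.
Qed.

Lemma exists_max (T : eqType) (F : T -> rat) (x : T) (xs : seq T) :
  exists2 y, y \in x :: xs & forall z, z \in x :: xs -> F z <= F y.
Proof.
elim: xs => [|z zs [y Hy Hmax]].
  by exists x; [rewrite mem_head | move=> z; rewrite inE => /eqP ->].
case: (boolP (F z <= F y)) => H.
  exists y; first by move: Hy; rewrite !inE => /orP[->|->]; rewrite ?orbT.
  move=> w; rewrite !inE => /or3P[/eqP->|/eqP->|Hw] //.
  - by apply: Hmax; rewrite mem_head.
  - by apply: Hmax; rewrite inE Hw orbT.
exists z; first by rewrite !inE eqxx orbT.
rewrite -ltNge in H.
move=> w; rewrite !inE => /or3P[/eqP->|/eqP->|Hw] //.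
- by apply: ltW; apply: le_lt_trans H; apply: Hmax; rewrite mem_head.
- by apply: ltW; apply: le_lt_trans H; apply: Hmax; rewrite inE Hw orbT.
Qed.

Lemma le_sum_one (n : nat) (k : 'I_n -> nat) (j : 'I_n) : (k j <= \sum_(i < n) k i)%N.
Proof. by rewrite (bigD1 j) //= leq_addr. Qed.

Lemma to_ffun (N m : nat) (k : 'I_N.+1 -> nat) : valid_k m k ->
  exists f : {ffun 'I_N.+1 -> 'I_m.+1},
    (\sum_(j < N.+1) val (f j) == m)%N /\ (fun j => val (f j)) = k.
Proof.
move=> Hk; exists [ffun j => inord (k j)].
have E : (fun j => val ([ffun j => (inord (k j) : 'I_m.+1)] j)) = k.
  apply: functional_extensionality => j; rewrite ffunE /= inordK //.
  by rewrite ltnS -[X in (_ <= X)%N]Hk le_sum_one.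
split; last exact: E.
apply/eqP; rewrite -[RHS]Hk; apply: eq_bigr => j _; exact: (congr1 (fun g => g j) E).
Qed.

Lemma adj_nondec (N : nat) (k : 'I_N.+1 -> nat) :
  (forall i i1 : 'I_N.+1, val i1 = i.+1 -> (k i <= k i1)%N) -> nondecreasing_k k.
Proof.
move=> H.
have G : forall d a, (a + d < N.+1)%N -> (k (inord a) <= k (inord (a + d)))%N.
  elim=> [|d IH] a Ha; first by rewrite addn0.
  have Ha' : (a + d < N.+1)%N by rewrite addnS in Ha; exact: ltnW.
  apply: leq_trans (IH a Ha') _.
  by apply: H; rewrite /= !inordK // addnS.
move=> i j ij.
have := G (j - i)%N i; rewrite subnKC // !inord_val; apply; exact: ltn_ord.
Qed.

Theorem proposition1 (n m : nat) (s : 'I_m -> rat)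
    (Psi : profile n m -> rat) (u : nat -> nat -> rat) :
  (0 < n)%N ->
  scoring_vector s ->
  distribution Psi ->
  (forall k : 'I_n -> nat, valid_k m k ->
     forall i : 'I_n, EU s Psi k i = u (k i) (\sum_(j < n | (j < i)%N) k j)%N) ->
  exists k : 'I_n -> nat,
    [/\ valid_k m k,
        (forall k' : 'I_n -> nat, valid_k m k' -> SWe s Psi k' <= SWe s Psi k)
      & nondecreasing_k k].
Proof.
move=> n0 Hs HPsi Hu.
destruct n as [|N]; first by [].
pose kf := fun f : {ffun 'I_N.+1 -> 'I_m.+1} => fun j => val (f j).
pose vb := fun f : {ffun 'I_N.+1 -> 'I_m.+1} => (\sum_(j < N.+1) val (f j) == m)%N.
pose k0 := fun j : 'I_N.+1 => if j == ord0 then m else 0%N.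
have Hk0 : valid_k m k0.
  rewrite /valid_k (bigD1 ord0) //= /k0 eqxx big1 ?addn0 // => j /negbTE ->; by [].
have [f0 [vf0 _]] := to_ffun Hk0.
pose cands := [seq f <- enum {ffun 'I_N.+1 -> 'I_m.+1} | vb f].
have [f1 Hf1 Hmax1] := exists_max (fun f => SWe s Psi (kf f)) f0 cands.
have vf1 : vb f1 by move: Hf1; rewrite inE mem_filter => /orP[/eqP->|/andP[]].
pose cands2 := [seq f <- enum {ffun 'I_N.+1 -> 'I_m.+1} | vb f && (SWe s Psi (kf f) == SWe s Psi (kf f1))].
have [f2 Hf2 Hmax2] := exists_max (fun f => (pot (kf f))%:R : rat) f1 cands2.
have [vf2 Ef2] : vb f2 /\ SWe s Psi (kf f2) = SWe s Psi (kf f1).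
  by move: Hf2; rewrite inE mem_filter => /orP[/eqP->|/andP[/andP[-> /eqP ->] _]].
have opt : forall k', valid_k m k' -> SWe s Psi k' <= SWe s Psi (kf f1).
  move=> k' Hk'; have [f' [vf' Ef']] := to_ffun Hk'.
  rewrite -Ef'; apply: Hmax1; rewrite inE mem_filter mem_enum andbT; apply/orP; right; exact: vf'.
exists (kf f2); split.
- exact/eqP.
- by move=> k' Hk'; rewrite Ef2; apply: opt.
apply: adj_nondec => i i1 Hi1.
rewrite leqNgt; apply/negP => Hlt.
have [Hk' Hpot HSW] := swap_lemma Hs HPsi Hu (k := kf f2) (eqP vf2) Hi1 Hlt.
set k' := fun j => kf f2 (tperm i i1 j) in Hk' Hpot HSW.
have [f' [vf' Ef']] := to_ffun Hk'.
have E' : SWe s Psi (kf f') = SWe s Psi (kf f1).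
  apply/eqP; rewrite eq_le; apply/andP; split.
    by rewrite /kf Ef'; apply: opt.
  by rewrite -Ef2 /kf Ef'.
have vbf' : vb f' := vf'.
have := Hmax2 f'; rewrite inE mem_filter vbf' E' eqxx mem_enum orbT /= => /(_ isT).
rewrite ler_nat /kf Ef' leqNgt; by rewrite Hpot.
Qed.
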